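(* Let $d,k,m$ be positive integers with $m>\max\{d,k\}$, let $\mathbf W\in\mathbb R^{k\times m}$ and $\mathbf V\in\mathbb R^{m\times d}$ with $\sigma_{\min}(\mathbf W)>0$ and $\sigma_{\min}(\mathbf V)>0$, and let $\boldsymbol\Sigma\in\mathbb R^{d\times d}$ be symmetric positive definite. Define $$\widehat{\mathbf G}_O=\mathbf W\mathbf W^\top\otimes\boldsymbol\Sigma+\mathbf I_k\otimes\boldsymbol\Sigma^{1/2}\mathbf V^\top\mathbf V\boldsymbol\Sigma^{1/2}\in\mathbb R^{kd\times kd}.$$ Then $\widehat{\mathbf G}_O$ is positive definite and, with $\beta_w=\sigma_{\min}^2(\mathbf W)/(\sigma_{\min}^2(\mathbf W)+\sigma_{\min}^2(\mathbf V))$, $$\kappa(\widehat{\mathbf G}_O)\le\kappa(\boldsymbol\Sigma)\cdot\frac{\sigma_{\max}^2(\mathbf W)+\sigma_{\max}^2(\mathbf V)}{\sigma_{\min}^2(\mathbf W)+\sigma_{\min}^2(\mathbf V)}=\kappa(\boldsymbol\Sigma)\big(\beta_w\,\kappa(\mathbf W)^2+(1-\beta_w)\,\kappa(\mathbf V)^2\big).$$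
   Context: $\boldsymbol\Sigma$ plays the role of the empirical input covariance $\frac1n\sum_i \mathbf x_i\mathbf x_i^\top$, and $\widehat{\mathbf G}_O$ is a matrix having the same nonzero eigenvalues as the Gauss–Newton matrix of the network $F(\mathbf x)=\mathbf W\mathbf V\mathbf x$. $\boldsymbol\Sigma^{1/2}$ is the unique positive semidefinite square root; $\otimes$ is the Kronecker product. For a symmetric positive definite matrix $\mathbf A$, $\kappa(\mathbf A)=\lambda_{\max}(\mathbf A)/\lambda_{\min}(\mathbf A)$. For a rectangular matrix $\mathbf A\in\mathbb R^{p\times q}$, $\sigma_{\max}(\mathbf A)$ is its largest singular value, $\sigma_{\min}(\mathbf A)$ is its $\min(p,q)$-th largest singular value, and $\kappa(\mathbf A)=\sigma_{\max}(\mathbf A)/\sigma_{\min}(\mathbf A)$. *)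

(* Defs.v *)
From mathcomp Require Import all_boot all_order all_algebra.
From mathcomp Require Import polyrcf mxtens.
Set Implicit Arguments. Unset Strict Implicit. Unset Printing Implicit Defensive.
Import Order.TTheory GRing.Theory Num.Theory.
Local Open Scope ring_scope.

Section Defs.
Variable R : rcfType.

Definition posdef n (A : 'M[R]_n) : Prop :=
  A^T = A /\ forall x : 'cV[R]_n, x != 0 -> 0 < (x^T *m A *m x) 0 0.

Definition psd n (A : 'M[R]_n) : Prop :=
  A^T = A /\ forall x : 'cV[R]_n, 0 <= (x^T *m A *m x) 0 0.

(* the (real) eigenvalues of A are the real roots of its characteristic
   polynomial; rootsR lists them in increasing order (without repetition). *)
Definition eigs n (A : 'M[R]_n) : seq R := rootsR (char_poly A).
Definition lambda_max n (A : 'M[R]_n) : R := last 0 (eigs A).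
Definition lambda_min n (A : 'M[R]_n) : R := head 0 (eigs A).

Definition kappa_sym n (A : 'M[R]_n) : R := lambda_max A / lambda_min A.

(* singular values of A : 'M_(p,q): the squares of the min(p,q) largest
   singular values are the eigenvalues of the min(p,q) x min(p,q) Gram matrix *)
Definition sigma_max p q (A : 'M[R]_(p, q)) : R :=
  Num.sqrt (lambda_max (A^T *m A)).
Definition sigma_min p q (A : 'M[R]_(p, q)) : R :=
  if (p <= q)%N then Num.sqrt (lambda_min (A *m A^T))
  else Num.sqrt (lambda_min (A^T *m A)).
Definition kappa_rect p q (A : 'M[R]_(p, q)) : R := sigma_max A / sigma_min A.

End Defs.

(* Main.v *)
Require Import Defs.
From mathcomp Require Import all_boot all_order all_algebra.
From mathcomp Require Import polyrcf mxtens complex.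
From mathcomp Require Import ring lra.
Set Implicit Arguments. Unset Strict Implicit. Unset Printing Implicit Defensive.
Import Order.TTheory GRing.Theory Num.Theory.
Local Open Scope ring_scope.

Section Ray.
Variable R : rcfType.
Local Notation C := (complex R).
Local Notation f := (real_complex R).

Lemma conjf (r : R) : (f r)^* = f r.
Proof.
apply: conj_Creal; rewrite realE; case: (lerP 0 r) => h.
  by rewrite -(rmorph0 (real_complex R)) lecR h.
apply/orP; right; by rewrite -(rmorph0 (real_complex R)) lecR ltW.
Qed.

Lemma map_conj_f m n (M : 'M[R]_(m, n)) : map_mx Num.conj (map_mx f M) = map_mx f M.
Proof. by apply/matrixP => i j; rewrite !mxE conjf. Qed.


Lemma path_last (s : seq R) a x : path <%R a s -> x \in a :: s -> x <= last a s.
Proof.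
elim: s a x => [|b s IH] a x /=.
  by rewrite inE => _ /eqP->.
move=> /andP[ab pbs]; rewrite inE => /orP[/eqP->|xin].
  by apply: (le_trans (ltW ab)); exact: (IH b b pbs (mem_head _ _)).
exact: IH.
Qed.

Lemma sorted_bounds (s : seq R) x : sorted <%R s -> x \in s ->
  head 0 s <= x /\ x <= last 0 s.
Proof.
case: s => [//|a s] /= ps xin; split; last exact: path_last.
move: xin; rewrite inE => /orP[/eqP->//|xin].
have /allP := order_path_min (@lt_trans _ R) ps.
by move=> /(_ x xin) /ltW.
Qed.

Lemma eig_bounds n (B : 'M[R]_n) r : root (char_poly B) r ->
  lambda_min B <= r /\ r <= lambda_max B.
Proof.
move=> rr; apply: sorted_bounds; first exact: sorted_roots.
have nz : char_poly B != 0 by rewrite monic_neq0 // char_poly_monic.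
by rewrite -(roots_on_rootsR nz) rr.
Qed.


Lemma realC_f (x : C) : x \is Num.real -> x = f (complex.Re x).
Proof.
case: x => a b; rewrite realE !lecE /= => /orP[|] /andP[/eqP h _];
  by subst b.
Qed.

Lemma delta_diag n (D : 'rV[C]_n) i :
  delta_mx 0 i *m diag_mx D = D 0 i *: (delta_mx 0 i : 'rV_n).
Proof.
apply/matrixP => a j; rewrite mul_mx_diag !mxE.
rewrite [a]ord1 eqxx /=; case: (eqVneq i j) => [->|ne]; by rewrite ?mulr1 ?mul1r ?mulr0 ?mul0r.
Qed.

Lemma rayleigh n (B : 'M[R]_n) (u : 'rV[R]_n) : B^T = B ->
  lambda_min B * (u *m u^T) 0 0 <= (u *m B *m u^T) 0 0 /\
  (u *m B *m u^T) 0 0 <= lambda_max B * (u *m u^T) 0 0.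
Proof.
move=> BT.
pose Bc := map_mx f B.
have BcH : map_mx Num.conj (Bc^T) = Bc by rewrite /Bc -map_trmx map_conj_f map_trmx BT.
have Bn : Bc \is normalmx by apply/normalmxP; rewrite BcH.
set P := spectralmx Bc; set D := spectral_diag Bc.
have BE : Bc = invmx P *m diag_mx D *m P := elimT (@orthomx_spectralP _ _ Bc) Bn.
have PU : P \is unitarymx := spectral_unitarymx Bc.
have Punit : P \in unitmx := spectral_unit Bc.
have Bh : Bc \is hermsymmx by apply/is_hermitianmxP; rewrite expr0 scale1r BcH.
have Dr := hermitian_spectral_diag_real Bh.
have eD : forall i, exists2 r, D 0 i = f r & lambda_min B <= r /\ r <= lambda_max B.
  move=> i; have Dri : D 0 i \is Num.real by exact: (mxOverP Dr 0 i).
  exists (complex.Re (D 0 i)); first exact: realC_f.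
  apply: eig_bounds.
  rewrite -(fmorph_root (real_complex R)) map_char_poly [X in root _ X](_ : _ = D 0 i); last by rewrite {2}(realC_f Dri).
  rewrite -eigenvalue_root_char; apply/eigenvalueP; exists (row i P).
    rewrite /Bc -/Bc {1}BE !mulmxA -row_mul mulmxV // row1 delta_diag.
    by rewrite -scalemxAl -rowE.
  apply/negP => /eqP h; have := congr1 (mulmx^~ (invmx P)) h.
  rewrite -row_mul mulmxV // mul0mx row1 => /matrixP/(_ 0 i).
  by rewrite !mxE !eqxx /= => /eqP; rewrite oner_eq0.
have iP : invmx P = map_mx Num.conj P^T := invmx_unitary PU.
pose uc := map_mx f u.
pose y := uc *m invmx P.
pose z := P *m uc^T.
have zE : forall j, z j 0 = (y 0 j)^*.
  move=> j; rewrite /z /y iP !mxE rmorph_sum; apply: eq_bigr => l _.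
  by rewrite !mxE rmorphM /= conjCK conjf mulrC.
have E1 : f ((u *m B *m u^T) 0 0) = (y *m diag_mx D *m z) 0 0.
  have : map_mx f (u *m B *m u^T) = uc *m Bc *m uc^T by rewrite !map_mxM map_trmx.
  move/matrixP/(_ 0 0); rewrite mxE => ->.
  by rewrite BE /y /z !mulmxA.
have E2 : f ((u *m u^T) 0 0) = (y *m z) 0 0.
  have : map_mx f (u *m u^T) = uc *m uc^T by rewrite !map_mxM map_trmx.
  move/matrixP/(_ 0 0); rewrite mxE => ->.
  by rewrite /y /z mulmxA -(mulmxA uc) mulVmx // mulmx1.
have S1 : (y *m diag_mx D *m z) 0 0 = \sum_j D 0 j * (y 0 j * (y 0 j)^*).
  rewrite mxE; apply: eq_bigr => j _; rewrite zE mul_mx_diag !mxE.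
  by rewrite mulrAC mulrC.
have S2 : (y *m z) 0 0 = \sum_j (y 0 j * (y 0 j)^*).
  by rewrite mxE; apply: eq_bigr => j _; rewrite zE.
split.
  rewrite -lecR rmorphM /= E1 E2 S1 S2 mulr_sumr; apply: ler_sum => j _.
  have [r -> [h1 h2]] := eD j.
  by apply: ler_wpM2r; [exact: mul_conjC_ge0 | rewrite lecR].
rewrite -lecR rmorphM /= E1 E2 S1 S2 mulr_sumr; apply: ler_sum => j _.
have [r -> [h1 h2]] := eD j.
by apply: ler_wpM2r; [exact: mul_conjC_ge0 | rewrite lecR].
Qed.


Lemma row_qform p n (B : 'M[R]_n) (M : 'M[R]_(p, n)) i :
  (M *m B *m M^T) i i = (row i M *m B *m (row i M)^T) 0 0.
Proof. by rewrite !mxE; apply: eq_bigr => k _; rewrite !mxE; congr (_ * _); apply: eq_bigr => l _; rewrite !mxE. Qed.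

Lemma trace_bounds p n (B : 'M[R]_n) (M : 'M[R]_(p, n)) : B^T = B ->
  lambda_min B * \tr (M *m M^T) <= \tr (M *m B *m M^T) /\
  \tr (M *m B *m M^T) <= lambda_max B * \tr (M *m M^T).
Proof.
have e : forall i, (M *m M^T) i i = (row i M *m (row i M)^T) 0 0.
  by move=> i; have := row_qform 1%:M M i; rewrite !mulmx1.
move=> BT; rewrite /mxtrace !mulr_sumr; split; apply: ler_sum => i _;
  have := rayleigh (row i M) BT; rewrite (row_qform B M i) e; by case=> ? ?.
Qed.

Lemma qform_sum N (T : 'M[R]_N) (x : 'cV[R]_N) :
  (x^T *m T *m x) 0 0 = \sum_a \sum_b x a 0 * T a b * x b 0.
Proof.
rewrite mxE; under eq_bigr => b _ do rewrite mxE mulr_suml.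
rewrite exchange_big; apply: eq_bigr => a _; apply: eq_bigr => b _.
by rewrite !mxE.
Qed.

Lemma sum_tens k d (F : 'I_(k * d) -> R) :
  \sum_a F a = \sum_(i < k) \sum_(j < d) F (mxtens_index (i, j)).
Proof.
rewrite pair_big /= (reindex (@mxtens_index k d)) /=.
  by apply: eq_bigr => -[i j] _.
by exists (@mxtens_unindex k d) => a _; rewrite (mxtens_indexK, mxtens_unindexK).
Qed.


Definition vmx k d (x : 'cV[R]_(k * d)) : 'M[R]_(k, d) :=
  \matrix_(i, j) x (mxtens_index (i, j)) 0.

Lemma qform_tens k d (A : 'M[R]_k) (B : 'M[R]_d) x :
  (x^T *m (A *t B) *m x) 0 0 = \tr ((vmx x)^T *m A *m vmx x *m B^T).
Proof.
transitivity (\sum_(i1 < k) \sum_(i2 < d) \sum_(j1 < k) \sum_(j2 < d)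
   vmx x i1 i2 * A i1 j1 * vmx x j1 j2 * B i2 j2).
  rewrite qform_sum sum_tens; apply: eq_bigr => i1 _; apply: eq_bigr => i2 _.
  rewrite sum_tens; apply: eq_bigr => j1 _; apply: eq_bigr => j2 _.
  rewrite tensmxE !mxE; ring.
symmetry.
transitivity (\sum_(i2 < d) \sum_(j2 < d) \sum_(j1 < k) \sum_(i1 < k)
   vmx x i1 i2 * A i1 j1 * vmx x j1 j2 * B i2 j2).
  rewrite /mxtrace; apply: eq_bigr => i2 _; rewrite mxE; apply: eq_bigr => j2 _.
  rewrite mxE mulr_suml; apply: eq_bigr => j1 _; rewrite mxE !mulr_suml.
  by apply: eq_bigr => i1 _; rewrite !mxE.
under eq_bigr => i2 _ do under eq_bigr => j2 _ do rewrite exchange_big.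
under eq_bigr => i2 _ do rewrite exchange_big.
rewrite exchange_big.
by under eq_bigr => i1 _ do under eq_bigr => i2 _ do rewrite exchange_big.
Qed.


Lemma norm_tens k d (x : 'cV[R]_(k * d)) :
  (x^T *m x) 0 0 = \tr (vmx x *m (vmx x)^T).
Proof.
rewrite mxE sum_tens /mxtrace; apply: eq_bigr => i _; rewrite mxE.
by apply: eq_bigr => j _; rewrite !mxE.
Qed.

Lemma norm_gt0 N (x : 'cV[R]_N) : x != 0 -> 0 < (x^T *m x) 0 0.
Proof.
move=> xn0; have h0 : forall a : 'I_N, true -> 0 <= x^T 0 a * x a 0.
  by move=> a _; rewrite !mxE -expr2 sqr_ge0.
rewrite mxE lt_def sumr_ge0 ?andbT //.
apply/negP => /eqP /(psumr_eq0P h0) h; move/negP: xn0; apply; apply/eqP/matrixP => a j.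
rewrite [j]ord1 !mxE; have := h a isT; rewrite !mxE => /eqP.
by rewrite -expr2 sqrf_eq0 => /eqP.
Qed.

Lemma tr_ge0 p n (M : 'M[R]_(p, n)) : 0 <= \tr (M *m M^T).
Proof.
rewrite /mxtrace sumr_ge0 // => i _; rewrite mxE sumr_ge0 // => j _.
by rewrite !mxE -expr2 sqr_ge0.
Qed.

Lemma lmin_le_lmax n (B : 'M[R]_n) : lambda_min B <= lambda_max B.
Proof.
rewrite /lambda_min /lambda_max.
have : sorted <%R (eigs B) by exact: sorted_roots.
case e: (eigs B) => [//|a s] srt.
by have [] := sorted_bounds srt (mem_head a s).
Qed.

Lemma eigs_root n (B : 'M[R]_n) : eigs B != [::] ->
  root (char_poly B) (lambda_min B) /\ root (char_poly B) (lambda_max B).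
Proof.
have nz : char_poly B != 0 by rewrite monic_neq0 // char_poly_monic.
have H := roots_on_rootsR nz.
rewrite /lambda_min /lambda_max /eigs.
case e: (rootsR _) => [//|a s] _ /=.
have h1 := H a; have h2 := H (last a s); rewrite e in h1 h2.
rewrite mem_head in h1; rewrite mem_last in h2.
by move/andP: h1 => [_ ->]; move/andP: h2 => [_ ->].
Qed.

Lemma eigvec n (B : 'M[R]_n) r : root (char_poly B) r ->
  exists2 v : 'rV_n, v != 0 & v *m B = r *: v.
Proof.
by rewrite -eigenvalue_root_char => /eigenvalueP [v h1 h2]; exists v.
Qed.


Lemma sym_root n (B : 'M[R]_n) : B^T = B -> (0 < n)%N ->
  exists r, root (char_poly B) r.
Proof.
move=> BT n0; pose i := Ordinal n0.
pose Bc := map_mx f B.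
have BcH : map_mx Num.conj (Bc^T) = Bc by rewrite /Bc -map_trmx map_conj_f map_trmx BT.
have Bn : Bc \is normalmx by apply/normalmxP; rewrite BcH.
set P := spectralmx Bc; set D := spectral_diag Bc.
have BE : Bc = invmx P *m diag_mx D *m P := elimT (@orthomx_spectralP _ _ Bc) Bn.
have Punit : P \in unitmx := spectral_unit Bc.
have Bh : Bc \is hermsymmx by apply/is_hermitianmxP; rewrite expr0 scale1r BcH.
have Dr := hermitian_spectral_diag_real Bh.
have Dri : D 0 i \is Num.real by exact: (mxOverP Dr 0 i).
exists (complex.Re (D 0 i)).
rewrite -(fmorph_root (real_complex R)) map_char_poly.
rewrite [X in root _ X](_ : _ = D 0 i); last by rewrite {2}(realC_f Dri).
rewrite -eigenvalue_root_char; apply/eigenvalueP; exists (row i P).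
  rewrite /Bc -/Bc {1}BE !mulmxA -row_mul mulmxV // row1 delta_diag.
  by rewrite -scalemxAl -rowE.
apply/negP => /eqP h; have := congr1 (mulmx^~ (invmx P)) h.
rewrite -row_mul mulmxV // mul0mx row1 => /matrixP/(_ 0 i).
by rewrite !mxE !eqxx /= => /eqP; rewrite oner_eq0.
Qed.


Lemma eig_q n (A : 'M[R]_n) r : root (char_poly A) r ->
  exists2 x : 'cV_n, 0 < (x^T *m x) 0 0 & (x^T *m A *m x) 0 0 = r * (x^T *m x) 0 0.
Proof.
move=> /eigvec [v vn0 vA]; exists v^T; rewrite trmxK.
  by have := @norm_gt0 n v^T; rewrite trmxK trmx_eq0; apply.
by rewrite vA -scalemxAl mxE.
Qed.

Lemma root_nonempty n (B : 'M[R]_n) r : root (char_poly B) r -> eigs B != [::].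
Proof.
have nz : char_poly B != 0 by rewrite monic_neq0 // char_poly_monic.
move=> rr; have := roots_on_rootsR nz r; rewrite rr /eigs.
rewrite andbT in_itv /=; by case: (rootsR _).
Qed.

Lemma lmin_nonempty n (B : 'M[R]_n) : lambda_min B != 0 -> eigs B != [::].
Proof. by rewrite /lambda_min; case: (eigs B) => //=; rewrite eqxx. Qed.

Lemma sym_roots n (B : 'M[R]_n) : B^T = B -> (0 < n)%N ->
  root (char_poly B) (lambda_min B) /\ root (char_poly B) (lambda_max B).
Proof.
move=> BT n0; have [r rr] := sym_root BT n0.
exact/eigs_root/(root_nonempty rr).
Qed.


Lemma gram_swap p q (W : 'M[R]_(p, q)) : 0 < lambda_min (W *m W^T) ->
  lambda_max (W *m W^T) <= lambda_max (W^T *m W).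
Proof.
move=> l0.
have ne : eigs (W *m W^T) != [::] by apply: lmin_nonempty; rewrite gt_eqF.
have [_ rM] := eigs_root ne.
set L := lambda_max (W *m W^T) in rM *.
have L0 : 0 < L := lt_le_trans l0 (lmin_le_lmax _).
have [u un0 uE] := eigvec rM.
apply: (proj2 (eig_bounds _)).
rewrite -eigenvalue_root_char; apply/eigenvalueP; exists (u *m W).
  by rewrite !mulmxA -(mulmxA u W W^T) uE -scalemxAl.
apply/negP => /eqP h; have : u *m (W *m W^T) = 0 by rewrite mulmxA h mul0mx.
rewrite uE => /eqP; rewrite scaler_eq0 (negbTE un0) orbF => /eqP L00.
by rewrite L00 ltxx in L0.
Qed.

End Ray.

Unset Implicit Arguments.

Theorem mainTheorem1 (R : rcfType) (d k m : nat)
  (W : 'M[R]_(k, m)) (V : 'M[R]_(m, d)) (Sigma Sigma_half : 'M[R]_d) :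
  (0 < d)%N -> (0 < k)%N -> (0 < m)%N -> (maxn d k < m)%N ->
  0 < sigma_min W -> 0 < sigma_min V ->
  posdef Sigma ->
  (* Sigma_half is the (unique) positive semidefinite square root of Sigma *)
  psd Sigma_half -> Sigma_half *m Sigma_half = Sigma ->
  let G := (W *m W^T) *t Sigma
           + (1%:M : 'M[R]_k) *t (Sigma_half *m V^T *m V *m Sigma_half) in
  let beta_w := sigma_min W ^+ 2 / (sigma_min W ^+ 2 + sigma_min V ^+ 2) in
  posdef G /\
  kappa_sym G <= kappa_sym Sigma *
     ((sigma_max W ^+ 2 + sigma_max V ^+ 2) / (sigma_min W ^+ 2 + sigma_min V ^+ 2)) /\
  kappa_sym Sigma *
     ((sigma_max W ^+ 2 + sigma_max V ^+ 2) / (sigma_min W ^+ 2 + sigma_min V ^+ 2))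
  = kappa_sym Sigma *
     (beta_w * kappa_rect W ^+ 2 + (1 - beta_w) * kappa_rect V ^+ 2).
Proof.
move=> d0 k0 m0 mx sW sV [ST Spd] [HT _] HH G beta.
set S := Sigma_half in HT HH G *.
have km : (k <= m)%N by move: mx; rewrite gtn_max => /andP[_ /ltnW].
have dm : (m <= d)%N = false by move: mx; rewrite gtn_max => /andP[/leq_gtF].
set lS := lambda_min Sigma; set LS := lambda_max Sigma.
set lW := lambda_min (W *m W^T); set LW' := lambda_max (W *m W^T).
set LW := lambda_max (W^T *m W).
set lV := lambda_min (V^T *m V); set LV := lambda_max (V^T *m V).
have sminW : sigma_min W = Num.sqrt lW by rewrite /sigma_min km.
have sminV : sigma_min V = Num.sqrt lV by rewrite /sigma_min dm.
have lW0 : 0 < lW by rewrite -sqrtr_gt0 -sminW.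
have lV0 : 0 < lV by rewrite -sqrtr_gt0 -sminV.
have WT : (W *m W^T)^T = W *m W^T by rewrite trmx_mul trmxK.
have VT : (V^T *m V)^T = V^T *m V by rewrite trmx_mul trmxK.
have lS0 : 0 < lS.
  have [r1 _] := sym_roots ST d0; have [x x0 xe] := eig_q r1.
  have := Spd x; rewrite xe.
  have xn0 : x != 0 by apply/negP => /eqP h; rewrite h trmx0 mul0mx mxE in x0; rewrite ltxx in x0.
  by move=> /(_ xn0); rewrite pmulr_lgt0.
have LS0 : 0 < LS := lt_le_trans lS0 (lmin_le_lmax _).
have LW'le : LW' <= LW := gram_swap lW0.
have LW0 : 0 < LW := lt_le_trans (lt_le_trans lW0 (lmin_le_lmax _)) LW'le.
have LV0 : 0 < LV := lt_le_trans lV0 (lmin_le_lmax _).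
have smaxW : sigma_max W ^+ 2 = LW by rewrite /sigma_max sqr_sqrtr // ltW.
have smaxV : sigma_max V ^+ 2 = LV by rewrite /sigma_max sqr_sqrtr // ltW.
have sminW2 : sigma_min W ^+ 2 = lW by rewrite sminW sqr_sqrtr // ltW.
have sminV2 : sigma_min V ^+ 2 = lV by rewrite sminV sqr_sqrtr // ltW.
pose clo := lS * (lW + lV); pose chi := LS * (LW + LV).
have qb : forall x : 'cV[R]_(k * d), clo * (x^T *m x) 0 0 <= (x^T *m G *m x) 0 0
   /\ (x^T *m G *m x) 0 0 <= chi * (x^T *m x) 0 0.
  move=> x; set X := vmx x; set Y := W^T *m X; set Z := X *m S.
  have qG : (x^T *m G *m x) 0 0 = \tr (Y *m Sigma *m Y^T) + \tr (Z *m (V^T *m V) *m Z^T).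
    rewrite /G mulmxDr mulmxDl mxE !qform_tens -/X; congr (_ + _).
      by rewrite ST /Y trmx_mul trmxK (mxtrace_mulC (W^T *m X *m Sigma)) !mulmxA.
    rewrite /Z mulmx1 !trmx_mul !trmxK HT !mulmxA.
    by rewrite [RHS]mxtrace_mulC !mulmxA.
  have nX : (x^T *m x) 0 0 = \tr (X *m X^T) := norm_tens x.
  have nX' : \tr (X^T *m X) = \tr (X *m X^T) := mxtrace_mulC _ _.
  have yy : \tr (Y *m Y^T) = \tr (X^T *m (W *m W^T) *m X).
    by rewrite /Y trmx_mul trmxK mxtrace_mulC !mulmxA.
  have zz : \tr (Z *m Z^T) = \tr (X *m Sigma *m X^T).
    by rewrite /Z trmx_mul HT -HH !mulmxA.
  have [t1l t1u] := trace_bounds Y ST.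
  have [t2l t2u] := trace_bounds Z VT.
  have [yl yu] := trace_bounds X^T WT.
  rewrite trmxK -yy nX' in yl yu.
  have [zl zu] := trace_bounds X ST.
  rewrite -zz in zl zu.
  rewrite -/lS -/LS -/lW -/LW' -/lV -/LV in t1l t1u t2l t2u yl yu zl zu.
  have N0 : 0 <= \tr (X *m X^T) := tr_ge0 X.
  have tyy0 := tr_ge0 Y; have tzz0 := tr_ge0 Z.
  rewrite qG nX /clo /chi.
  have a1 := ler_wpM2l (ltW lS0) yl.
  have a2 := ler_wpM2l (ltW lV0) zl.
  have a3 := ler_wpM2l (ltW LS0) yu.
  have a4 := ler_wpM2l (ltW LS0) (ler_wpM2r N0 LW'le).
  have a5 := ler_wpM2l (ltW LV0) zu.
  split; lra.
have clo0 : 0 < clo by rewrite /clo mulr_gt0 // addr_gt0.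
have chi0 : 0 < chi by rewrite /chi mulr_gt0 // addr_gt0.
have GT : G^T = G.
  by rewrite /G linearD /= !trmx_tens !trmx_mul !trmxK ST trmx1 HT !mulmxA.
split.
  split => // x xn0; have [h _] := qb x; apply: lt_le_trans h.
  by rewrite mulr_gt0 // norm_gt0.
have Req : kappa_sym Sigma * ((sigma_max W ^+ 2 + sigma_max V ^+ 2) /
    (sigma_min W ^+ 2 + sigma_min V ^+ 2)) = chi / clo.
  rewrite smaxW smaxV sminW2 sminV2 /kappa_sym -/lS -/LS /chi /clo.
  by field; rewrite !gt_eqF // addr_gt0.
split.
  rewrite Req; case e: (eigs G) => [|a s].
    by rewrite /kappa_sym /lambda_max /lambda_min e /= mul0r divr_ge0 // ltW.
  have ne : eigs G != [::] by rewrite e.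
  have [rmin rmax] := eigs_root ne.
  have [x1 n1 e1] := eig_q rmin; have [x2 n2 e2] := eig_q rmax.
  have lo : clo <= lambda_min G.
    by have [h _] := qb x1; rewrite e1 in h; rewrite -(ler_pM2r n1).
  have hi : lambda_max G <= chi.
    by have [_ h] := qb x2; rewrite e2 in h; rewrite -(ler_pM2r n2).
  have lmin0 : 0 < lambda_min G := lt_le_trans clo0 lo.
  rewrite /kappa_sym; apply: (@le_trans _ _ (chi / lambda_min G)).
    by apply: ler_wpM2r => //; rewrite ltW // invr_gt0.
  by apply: ler_wpM2l; [exact: ltW | rewrite lef_pV2 ?posrE].
congr (_ * _); rewrite /beta /kappa_rect.
by field; rewrite !gt_eqF // addr_gt0 // exprn_gt0.
Qed.
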